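(* Let $\Gamma_{\mathrm{comp}}$ be the set of all sufficiently pure branches $A$ such that every finite subset of $A$ is satisfiable. Then $\Gamma_{\mathrm{comp}}$ is a complete abstract consistency class.
   Context: Types: a countable set of base types including a distinguished $o$; other base types are sorts ($\alpha$). Types: base types and $\sigma\tau$ (functions from $\sigma$ to $\tau$; $\sigma\tau\mu=\sigma(\tau\mu)$). Countably many names, each with a unique type, infinitely many of each type. Terms: names; $st:\mu$ for $s:\tau\mu,t:\tau$; $\lambda x.t:\sigma\tau$ for a name $x:\sigma$, $t:\tau$. Logical constants: $\neg:oo$, $=_\sigma:\sigma\sigma o$; other names are variables. Formulas: terms of type $o$; $s=_\sigma t$ is $(=_\sigma s)t$; $s\neq_\sigma t$ is $\neg(s=_\sigma t)$. Semantics: a frame $\mathcal{D}$ maps types to nonempty sets with $\mathcal{D}(\sigma\tau)\subseteq(\mathcal{D}\sigma\to\mathcal{D}\tau)$. An assignment $\mathcal{I}$ into $\mathcal{D}$ extends $\mathcal{D}$ and maps names $x:\sigma$ into $\mathcal{D}\sigma$; $\mathcal{I}^x_a$ is the update. Partial evaluation: $\hat{\mathcal{I}}x=\mathcal{I}x$; $\hat{\mathcal{I}}(st)=(\hat{\mathcal{I}}s)(\hat{\mathcal{I}}t)$ when defined; $\hat{\mathcal{I}}(\lambda x.s)=f$ if $\lambda x.s:\sigma\tau$, $f\in\mathcal{D}(\sigma\tau)$ and $\widehat{\mathcal{I}^x_a}s=fa$ for all $a\in\mathcal{D}\sigma$. Interpretation: assignment with total evaluation. Logical: $\mathcal{I}o=\{0,1\}$,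 $\mathcal{I}(\neg)$ negation, $\mathcal{I}(=_\sigma)$ identity. A set of formulas is satisfiable if some logical interpretation evaluates all of them to $1$. Normalization: fixed type-preserving total $[\cdot]$; $s$ normal iff $[s]=s$; $[[s]]=[s]$; $[[s]t]=[st]$; $[xs_1\dots s_n]=x[s_1]\dots[s_n]$ for a name $x$, $n\ge0$, $xs_1\dots s_n$ of base type; $\hat{\mathcal{I}}[s]=\hat{\mathcal{I}}s$ for every interpretation $\mathcal{I}$. A branch is a set of normal formulas. A branch $A$ is sufficiently pure if for every type $\sigma$ there are infinitely many variables of type $\sigma$ not occurring free in the formulas of $A$. An abstract consistency class is a set $\Gamma$ of branches such that every $A\in\Gamma$ satisfies ($x$ ranges over variables): (DN) if $\neg\neg s\in A$ then $A\cup\{s\}\in\Gamma$; (BQ) if $s=_ot\in A$ then $A\cup\{s,t\}\in\Gamma$ or $A\cup\{\neg s,\neg t\}\in\Gamma$; (BE) if $s\neq_ot\in A$ then $A\cup\{s,\neg t\}\in\Gamma$ or $A\cup\{\neg s,t\}\in\Gamma$; (FQ) if $s=_{\sigma\tau}t\in A$ then $A\cup\{[su]=[tu]\}\in\Gamma$ for every normal $u:\sigma$; (FE) if $s\neq_{\sigma\tau}t\in A$ then $A\cup\{[sx]\neq[tx]\}\in\Gamma$ for some variable $x$; (Mat) if $xs_1\dots s_n,\neg xt_1\dots t_n\in A$ then $n\ge1$ and $A\cup\{s_i\neq t_i\}\in\Gamma$ for some $i$; (Dec) if $xs_1\dots s_n\neq_\alpha xt_1\dots t_n\in A$ then $n\ge1$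 and $A\cup\{s_i\neq t_i\}\in\Gamma$ for some $i$; (Con) if $s=_\alpha t,u\neq_\alpha v\in A$ then $A\cup\{s\neq u,t\neq u\}\in\Gamma$ or $A\cup\{s\neq v,t\neq v\}\in\Gamma$. $\Gamma$ is complete if for all $A\in\Gamma$ and normal formulas $s$, $A\cup\{s\}\in\Gamma$ or $A\cup\{\neg s\}\in\Gamma$. *)

(* Defs.v *)
From Stdlib Require Import List Arith.
Import ListNotations.
Set Implicit Arguments.

Inductive ty : Type :=
| Base : nat -> ty
| Arr : ty -> ty -> ty.

Definition o : ty := Base 0.
Definition is_sort (s : ty) : Prop := exists k, s = Base (S k).

Definition ty_eq_dec (s t : ty) : {s = t} + {s <> t}.
Proof. decide equality; apply Nat.eq_dec. Defined.

Inductive name : Type :=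
| NVar : ty -> nat -> name
| NNeg : name
| NEq : ty -> name.

Definition nty (x : name) : ty :=
  match x with
  | NVar s _ => s
  | NNeg => Arr o o
  | NEq s => Arr s (Arr s o)
  end.

Definition is_var (x : name) : Prop := exists s n, x = NVar s n.

Definition name_eq_dec (x y : name) : {x = y} + {x <> y}.
Proof. decide equality; try apply ty_eq_dec; apply Nat.eq_dec. Defined.

Inductive tm : ty -> Type :=
| Nm : forall x : name, tm (nty x)
| App : forall s t, tm (Arr s t) -> tm s -> tm t
| Lam : forall (x : name) t, tm t -> tm (Arr (nty x) t).

Arguments App {s t} _ _.
Arguments Lam x {t} _.

Definition Neg (s : tm o) : tm o := App (Nm NNeg : tm (Arr o o)) s.
Definition Eqt {s : ty} (a b : tm s) : tm o :=
  App (App (Nm (NEq s) : tm (Arr s (Arr s o))) a) b.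
Definition Neqt {s : ty} (a b : tm s) : tm o := Neg (Eqt a b).

Fixpoint free_in (x : name) {s} (t : tm s) : Prop :=
  match t with
  | Nm y => x = y
  | App u v => free_in x u \/ free_in x v
  | Lam y b => x <> y /\ free_in x b
  end.

(* A frame: nonempty domains with D(s t) included (via the extensional,
   hence injective, application map) in the function space D s -> D t. *)
Record Frame : Type := {
  dom : ty -> Type;
  dom_ne : forall s, inhabited (dom s);
  app : forall s t, dom (Arr s t) -> dom s -> dom t;
  app_ext : forall s t (f g : dom (Arr s t)),
      (forall a, app f a = app g a) -> f = g
}.
Arguments app {_ s t} _ _.

Definition asg (F : Frame) : Type := forall x : name, dom F (nty x).

Definition upd (F : Frame) (I : asg F) (x : name) (a : dom F (nty x)) : asg F :=
  fun y => match name_eq_dec x y with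
           | left e => eq_rect x (fun z => dom F (nty z)) a y e
           | right _ => I y
           end.

(* Partial evaluation, as a relation: ev t I a  means  \hat I t = a. *)
Fixpoint ev (F : Frame) {s} (t : tm s) : asg F -> dom F s -> Prop :=
  match t in tm s0 return asg F -> dom F s0 -> Prop with
  | Nm x => fun I a => a = I x
  | App u v => fun I b =>
      exists f a, ev u I f /\ ev v I a /\ b = app f a
  | Lam x body => fun I f =>
      forall a, ev body (upd I x a) (app f a)
  end.

Definition interp (F : Frame) (I : asg F) : Prop :=
  forall s (t : tm s), exists a, ev t I a.

(* Logical interpretation, relative to the identification tv of D o with
   {0,1} (= bool): tv is a bijection, ~ is negation, =_s is identity. *)
Definition logical (F : Frame) (I : asg F) (tv : dom F o -> bool) : Prop :=
  interp I /\
  (forall a b, tv a = tv b -> a = b) /\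
  (forall bb, exists a, tv a = bb) /\
  (forall a, tv (@app F o o (I NNeg) a) = negb (tv a)) /\
  (forall s (a b : dom F s),
      tv (@app F s o (@app F s (Arr s o) (I (NEq s)) a) b) = true <-> a = b).

Definition satisfiable (S : tm o -> Prop) : Prop :=
  exists (F : Frame) (I : asg F) (tv : dom F o -> bool),
    logical I tv /\ forall s, S s -> exists a, ev s I a /\ tv a = true.

Definition nfop : Type := forall s, tm s -> tm s.

Fixpoint is_spine {s} (t : tm s) : bool :=
  match t with
  | Nm _ => true
  | App u _ => is_spine u
  | Lam _ _ => false
  end.

Fixpoint map_args (nf : nfop) {s} (t : tm s) : tm s :=
  match t in tm s0 return tm s0 with
  | Nm x => Nm x
  | App u v => App (map_args nf u) (nf _ v)
  | Lam x b => Lam x b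
  end.

Record NormAx (nf : nfop) : Prop := {
  nf_idem : forall s (t : tm s), nf s (nf s t) = nf s t;
  nf_app : forall s t (u : tm (Arr s t)) (v : tm s),
      nf t (App (nf _ u) v) = nf t (App u v);
  nf_spine : forall b (t : tm (Base b)), is_spine t = true ->
      nf _ t = map_args nf t;
  nf_sound : forall (F : Frame) (I : asg F), interp I ->
      forall s (t : tm s) a, ev (nf s t) I a <-> ev t I a
}.

Definition normal (nf : nfop) {s} (t : tm s) : Prop := nf s t = t.

Definition branch (nf : nfop) (A : tm o -> Prop) : Prop :=
  forall s, A s -> normal nf s.

Definition suff_pure (A : tm o -> Prop) : Prop :=
  forall (s : ty) (N : nat), exists n, N <= n /\
    ~ (exists f, A f /\ free_in (NVar s n) f).

Definition add (A : tm o -> Prop) (s : tm o) : tm o -> Prop :=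
  fun u => A u \/ u = s.

(* x s1 ... sn  and  x t1 ... tn  with the same head x, and
   l = [s1 <> t1; ...; sn <> tn] *)
Inductive Spines (x : name) : forall s, tm s -> tm s -> list (tm o) -> Prop :=
| SpNil : Spines x (Nm x) (Nm x) nil
| SpApp : forall s t (u v : tm (Arr s t)) (a b : tm s) l,
    Spines x u v l -> Spines x (App u a) (App v b) (l ++ [Neqt a b]).

Definition ACC (nf : nfop) (G : (tm o -> Prop) -> Prop) : Prop :=
  forall A, G A ->
  (forall s, A (Neg (Neg s)) -> G (add A s)) /\
  (forall s t : tm o, A (Eqt s t) ->
     G (add (add A s) t) \/ G (add (add A (Neg s)) (Neg t))) /\
  (forall s t : tm o, A (Neqt s t) ->
     G (add (add A s) (Neg t)) \/ G (add (add A (Neg s)) t)) /\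
  (forall sg tau (s t : tm (Arr sg tau)), A (Eqt s t) ->
     forall u : tm sg, normal nf u ->
       G (add A (Eqt (nf _ (App s u)) (nf _ (App t u))))) /\
  (forall sg tau (s t : tm (Arr sg tau)), A (Neqt s t) ->
     exists n, G (add A (Neqt (nf _ (App s (Nm (NVar sg n) : tm sg)))
                              (nf _ (App t (Nm (NVar sg n) : tm sg)))))) /\
  (forall x (u v : tm o) l, is_var x -> Spines x u v l ->
     A u -> A (Neg v) ->
     l <> nil /\ exists d, In d l /\ G (add A d)) /\
  (forall x al (u v : tm al) l, is_var x -> is_sort al -> Spines x u v l ->
     A (Neqt u v) ->
     l <> nil /\ exists d, In d l /\ G (add A d)) /\
  (forall al (s t u v : tm al), is_sort al -> A (Eqt s t) -> A (Neqt u v) ->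
     G (add (add A (Neqt s u)) (Neqt t u)) \/
     G (add (add A (Neqt s v)) (Neqt t v))).

Definition complete_class (nf : nfop) (G : (tm o -> Prop) -> Prop) : Prop :=
  forall A, G A -> forall s : tm o, normal nf s -> G (add A s) \/ G (add A (Neg s)).

Definition Gcomp (nf : nfop) (A : tm o -> Prop) : Prop :=
  branch nf A /\ suff_pure A /\
  forall l : list (tm o), (forall s, In s l -> A s) ->
    satisfiable (fun s => In s l).

(* Main.v *)
Require Import Defs.
From Stdlib Require Import List Arith Lia Classical Eqdep_dec.
Import ListNotations.

Lemma App_inj s t (u u' : tm (Arr s t)) (v v' : tm s) :
  App u v = App u' v' -> u = u' /\ v = v'.
Proof.
  intro H. injection H as H1 H2.
  apply inj_pair2_eq_dec in H1; [|exact ty_eq_dec].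
  apply inj_pair2_eq_dec in H1; [|exact ty_eq_dec].
  apply inj_pair2_eq_dec in H2; [|exact ty_eq_dec].
  auto.
Qed.


Lemma normal_Neg nf (Hnf : NormAx nf) s : normal nf s -> normal nf (Neg s).
Proof.
  unfold normal. intros H. change o with (Base 0). rewrite (nf_spine Hnf (Neg s) eq_refl).
  simpl. rewrite H. reflexivity.
Qed.

Lemma normal_Neg_inv nf (Hnf : NormAx nf) s : normal nf (Neg s) -> normal nf s.
Proof.
  unfold normal. intros H. change o with (Base 0) in H. rewrite (nf_spine Hnf (Neg s) eq_refl) in H.
  simpl in H. apply App_inj in H as [_ H]. exact H.
Qed.

Lemma normal_Eqt nf (Hnf : NormAx nf) sg (a b : tm sg) :
  normal nf a -> normal nf b -> normal nf (Eqt a b).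
Proof.
  unfold normal. intros Ha Hb. change o with (Base 0). rewrite (nf_spine Hnf (Eqt a b) eq_refl).
  simpl. rewrite Ha, Hb. reflexivity.
Qed.

Lemma normal_Eqt_inv nf (Hnf : NormAx nf) sg (a b : tm sg) :
  normal nf (Eqt a b) -> normal nf a /\ normal nf b.
Proof.
  unfold normal. intros H. change o with (Base 0) in H. rewrite (nf_spine Hnf (Eqt a b) eq_refl) in H.
  simpl in H. apply App_inj in H as [H Hb]. apply App_inj in H as [_ Ha]. auto.
Qed.

Lemma normal_Neqt nf (Hnf : NormAx nf) sg (a b : tm sg) :
  normal nf a -> normal nf b -> normal nf (Neqt a b).
Proof. intros. apply normal_Neg; auto. apply normal_Eqt; auto. Qed.

Lemma normal_Neqt_inv nf (Hnf : NormAx nf) sg (a b : tm sg) :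
  normal nf (Neqt a b) -> normal nf a /\ normal nf b.
Proof. intros H. apply normal_Neg_inv in H; auto. apply normal_Eqt_inv; auto. Qed.

Lemma normal_nf nf (Hnf : NormAx nf) s (t : tm s) : normal nf (nf s t).
Proof. apply (nf_idem Hnf). Qed.

Lemma spines_is_spine x s (u v : tm s) l : Spines x u v l -> is_spine u = true /\ is_spine v = true.
Proof. induction 1; simpl; auto. Qed.

Lemma spines_normal nf (Hnf : NormAx nf) x s (u v : tm s) l : Spines x u v l ->
  map_args nf u = u -> map_args nf v = v -> forall d, In d l -> normal nf d.
Proof.
  induction 1; simpl.
  - intros _ _ d [].
  - intros Hu Hv d Hd. apply App_inj in Hu as [Hu Ha]. apply App_inj in Hv as [Hv Hb].
    apply in_app_or in Hd as [Hd|Hd]; [apply IHSpines; auto|].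
    destruct Hd as [<-|[]]. apply normal_Neqt; auto.
Qed.

Lemma fv_bound sg : forall s (t : tm s), exists B, forall n, free_in (NVar sg n) t -> n < B.
Proof.
  induction t.
  - exists (match x with NVar _ m => S m | _ => 0 end). intros n H; simpl in H; subst x; lia.
  - destruct IHt1 as [B1 H1], IHt2 as [B2 H2]. exists (B1 + B2).
    intros n [H|H]; [apply H1 in H|apply H2 in H]; lia.
  - destruct IHt as [B H]. exists B. intros n [_ Hn]; auto.
Qed.

Lemma pure_mono (A B : tm o -> Prop) : (forall u, B u -> A u) -> suff_pure A -> suff_pure B.
Proof.
  intros H HA sg N. destruct (HA sg N) as (n & Hn & Hf). exists n; split; auto.
  intros (f & Hf1 & Hf2). apply Hf. eauto.
Qed.

Lemma pure_add A s : suff_pure A -> suff_pure (add A s).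
Proof.
  intros HA sg N. destruct (fv_bound sg _ s) as [B HB].
  destruct (HA sg (N+B)) as (n & Hn & Hf). exists n. split; [lia|].
  intros (f & [Hf1|Hf1] & Hfr); [apply Hf; eauto|subst f; apply HB in Hfr; lia].
Qed.

Lemma pure_list A c : suff_pure A -> suff_pure (fun u => A u \/ In u c).
Proof.
  induction c; intros HA.
  - eapply pure_mono; [|exact HA]. intros u [H|[]]; auto.
  - eapply pure_mono; [|apply pure_add with (s := a); apply IHc; exact HA].
    intros u [H|[H|H]]; unfold add; auto.
Qed.

Definition Sat {F : Frame} (I : asg F) (tv : dom F o -> bool) (u : tm o) : Prop :=
  exists a, ev u I a /\ tv a = true.

Definition Model {F : Frame} (I : asg F) (tv : dom F o -> bool) (k : list (tm o)) : Prop :=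
  logical I tv /\ forall u, In u k -> Sat I tv u.

Definition finsat (B : tm o -> Prop) : Prop :=
  forall l, (forall s, In s l -> B s) -> satisfiable (fun s => In s l).

Lemma ev_Neg F (I : asg F) s w :
  ev (Neg s) I w <-> exists a, ev s I a /\ w = @Defs.app F o o (I NNeg) a.
Proof.
  simpl. split.
  - intros (f & a & Hf & Ha & ->). subst f. eauto.
  - intros (a & Ha & ->). exists (I NNeg), a. auto.
Qed.

Lemma ev_Eqt F (I : asg F) sg (a b : tm sg) w :
  ev (Eqt a b) I w <-> exists x y, ev a I x /\ ev b I y /\
     w = @Defs.app F sg o (@Defs.app F sg (Arr sg o) (I (NEq sg)) x) y.
Proof.
  simpl. split.
  - intros (f & c & (g & x & Hg & Hx & ->) & Hc & ->). subst g. eauto.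
  - intros (x & y & Hx & Hy & ->). exists (@Defs.app F sg (Arr sg o) (I (NEq sg)) x), y.
    split; auto. exists (I (NEq sg)), x. auto.
Qed.

Lemma Sat_Neg F (I : asg F) tv s : logical I tv ->
  (Sat I tv (Neg s) <-> exists a, ev s I a /\ tv a = false).
Proof.
  intros (Hint & Hinj & Hsurj & Hneg & Heq). unfold Sat. split.
  - intros (w & Hw & Ht). apply ev_Neg in Hw as (a & Ha & ->).
    rewrite Hneg in Ht. exists a. split; auto. destruct (tv a); simpl in *; congruence.
  - intros (a & Ha & Ht). exists (@Defs.app F o o (I NNeg) a). split.
    + apply ev_Neg. eauto.
    + rewrite Hneg, Ht. reflexivity.
Qed.

Lemma Sat_Eqt F (I : asg F) tv sg (a b : tm sg) : logical I tv ->
  (Sat I tv (Eqt a b) <-> exists x y, ev a I x /\ ev b I y /\ x = y).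
Proof.
  intros (Hint & Hinj & Hsurj & Hneg & Heq). unfold Sat. split.
  - intros (w & Hw & Ht). apply ev_Eqt in Hw as (x & y & Hx & Hy & ->).
    apply Heq in Ht. eauto.
  - intros (x & y & Hx & Hy & Hxy). eexists. split.
    + apply ev_Eqt. exists x, y. eauto.
    + apply Heq. exact Hxy.
Qed.

Lemma Sat_Neqt F (I : asg F) tv sg (a b : tm sg) : logical I tv ->
  (Sat I tv (Neqt a b) <-> exists x y, ev a I x /\ ev b I y /\ x <> y).
Proof.
  intros HL. pose proof HL as (Hint & Hinj & Hsurj & Hneg & Heq).
  unfold Neqt. rewrite Sat_Neg by exact HL. split.
  - intros (w & Hw & Ht). apply ev_Eqt in Hw as (x & y & Hx & Hy & ->).
    exists x, y. repeat split; auto. intro E. apply Heq in E. congruence.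
  - intros (x & y & Hx & Hy & Hxy). eexists. split.
    + apply ev_Eqt. exists x, y. eauto.
    + destruct (tv _) eqn:E; auto. apply Heq in E. contradiction.
Qed.

Lemma Sat_dec F (I : asg F) tv s : logical I tv -> Sat I tv s \/ Sat I tv (Neg s).
Proof.
  intros HL. pose proof HL as (Hint & _). destruct (Hint o s) as [a Ha].
  destruct (tv a) eqn:E.
  - left. exists a. auto.
  - right. apply Sat_Neg; eauto.
Qed.

Lemma spines_sem F (I : asg F) tv x s (u v : tm s) l : logical I tv -> Spines x u v l ->
  (forall d, In d l -> ~ Sat I tv d) -> forall a b, ev u I a -> ev v I b -> a = b.
Proof.
  intros HL. induction 1; intros Hd.
  - simpl. intros a b -> ->. reflexivity.
  - intros a0 b0 Ha Hb. simpl in Ha, Hb.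
    destruct Ha as (f & c & Hf & Hc & ->). destruct Hb as (g & e & Hg & He & ->).
    assert (f = g) as <-.
    { apply IHSpines; auto. intros d Hdl. apply Hd. apply in_or_app; auto. }
    destruct (classic (c = e)) as [<-|Hce]; auto.
    exfalso. apply (Hd (Neqt a b)). apply in_or_app; simpl; auto.
    apply Sat_Neqt; auto. eauto.
Qed.

Lemma ev_agree F : forall s (t : tm s) (I J : asg F),
  (forall x, free_in x t -> I x = J x) -> forall a, ev t I a <-> ev t J a.
Proof.
  induction t as [x|s1 s2 t1 IHt1 t2 IHt2|x s1 t IHt]; intros I J H a.
  - simpl. rewrite H; [tauto|reflexivity].
  - assert (E1 : forall f, ev t1 I f <-> ev t1 J f) by (apply IHt1; intros; apply H; simpl; auto).
    assert (E2 : forall f, ev t2 I f <-> ev t2 J f) by (apply IHt2; intros; apply H; simpl; auto).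
    simpl. split; intros (f & b & H1 & H2 & H3); exists f, b; repeat split;
      try apply E1; try apply E2; auto.
  - simpl.
    assert (E : forall a0, forall y, free_in y t -> upd I x a0 y = upd J x a0 y).
    { intros a0 y Hy. unfold upd. destruct (name_eq_dec x y); auto.
      apply H. simpl. split; auto. }
    split; intros Hf a0; apply (IHt (upd I x a0) (upd J x a0)); auto.
    all: intros y Hy; try symmetry; auto.
Qed.

Lemma upd_same F (I : asg F) x a : upd I x a x = a.
Proof.
  unfold upd. destruct (name_eq_dec x x); [|congruence].
  rewrite <- (eq_rect_eq_dec name_eq_dec). reflexivity.
Qed.

Lemma upd_other F (I : asg F) x a y : x <> y -> upd I x a y = I y.
Proof. unfold upd. destruct (name_eq_dec x y); congruence. Qed.

Lemma interp_upd F (I : asg F) x a : interp I -> interp (upd I x a).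
Proof.
  intros Hint s t. destruct (Hint _ (Lam x t)) as [f Hf]. exists (Defs.app f a). apply Hf.
Qed.

Lemma logical_upd F (I : asg F) tv sg n a : logical I tv ->
  logical (upd I (NVar sg n) a) tv.
Proof.
  intros (Hint & Hinj & Hsurj & Hneg & Heq). split; [apply interp_upd; auto|].
  split; [exact Hinj|]. split; [exact Hsurj|]. split.
  { intros b0. rewrite upd_other by discriminate. auto. }
  intros s0 b0 c0. rewrite upd_other by discriminate. apply Heq.
Qed.

Lemma extract (B P : tm o -> Prop) l : (forall u, In u l -> B u \/ P u) ->
  exists l', (forall u, In u l' -> B u) /\ forall u, In u l -> In u l' \/ P u.
Proof.
  induction l as [|a l IHl]; intros H.
  - exists nil. simpl. tauto.
  - destruct IHl as (l' & H1 & H2). { intros; apply H; simpl; auto. }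
    destruct (H a (or_introl eq_refl)) as [Ha|Ha].
    + exists (a :: l'). split.
      * intros u [<-|Hu]; auto.
      * intros u [<-|Hu]; [left; left; auto|]. destruct (H2 u Hu); simpl; auto.
    + exists l'. split; auto. intros u [<-|Hu]; auto.
Qed.

Lemma not_finsat A c : ~ finsat (fun u => A u \/ In u c) ->
  exists L, (forall u, In u L -> A u) /\
    forall F (I : asg F) tv, Model I tv L -> (forall u, In u c -> Sat I tv u) -> False.
Proof.
  intro H. apply not_all_ex_not in H as [l Hl]. apply imply_to_and in Hl as [Hl Hns].
  destruct (extract _ _ _ Hl) as (L & HL1 & HL2). exists L; split; auto.
  intros F I tv [Hlog HM] Hc. apply Hns. exists F, I, tv. split; auto.
  intros s Hs. destruct (HL2 s Hs); [apply HM|apply Hc]; auto.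
Qed.

Lemma combine A cs : (forall c, In c cs -> ~ finsat (fun u => A u \/ In u c)) ->
  exists L, (forall u, In u L -> A u) /\
    forall F (I : asg F) tv, Model I tv L -> forall c, In c cs ->
      (forall u, In u c -> Sat I tv u) -> False.
Proof.
  induction cs as [|a cs IH]; intros H.
  - exists nil. split; [simpl; tauto|]. intros F I tv _ c [].
  - destruct (not_finsat A a) as (L1 & H11 & H12). { apply H; simpl; auto. }
    destruct IH as (L2 & H21 & H22). { intros; apply H; simpl; auto. }
    exists (L1 ++ L2). split.
    + intros u Hu. apply in_app_or in Hu as [Hu|Hu]; auto.
    + intros F I tv [Hl HM] c [<-|Hc] Hs.
      * apply (H12 F I tv); auto. split; auto. intros; apply HM; apply in_or_app; auto.
      * apply (H22 F I tv) with c; auto. split; auto. intros; apply HM; apply in_or_app; auto.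
Qed.

Lemma choose A k cs : finsat A -> (forall u, In u k -> A u) ->
  (forall F (I : asg F) tv, Model I tv k -> exists c, In c cs /\ forall u, In u c -> Sat I tv u) ->
  exists c, In c cs /\ finsat (fun u => A u \/ In u c).
Proof.
  intros HA Hk Hsem. apply NNPP; intro Hno.
  destruct (combine A cs) as (L & HL & HLf). { intros c Hc Hf; apply Hno; eauto. }
  destruct (HA (k ++ L)) as (F & I & tv & Hlog & Hs).
  { intros u Hu; apply in_app_or in Hu; destruct Hu; auto. }
  destruct (Hsem F I tv) as (c & Hc & Hcs).
  { split; auto; intros; apply Hs; apply in_or_app; auto. }
  eapply (HLf F I tv); [|exact Hc|exact Hcs].
  split; auto; intros; apply Hs; apply in_or_app; auto.
Qed.

Lemma Gcomp_of nf A c (B : tm o -> Prop) : Gcomp nf A ->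
  (forall u, In u c -> normal nf u) -> finsat (fun u => A u \/ In u c) ->
  (forall u, B u -> A u \/ In u c) -> Gcomp nf B.
Proof.
  intros (HAb & HAp & HAf) Hc Hf HB. split; [|split].
  - intros s Hs. destruct (HB s Hs); auto.
  - eapply pure_mono; [exact HB|]. apply pure_list; auto.
  - intros l Hl. apply Hf. auto.
Qed.

Lemma sub1 (A : tm o -> Prop) a w : add A a w -> A w \/ In w [a].
Proof. intros [H|H]; subst; simpl; auto. Qed.

Lemma sub2 (A : tm o -> Prop) a b w : add (add A a) b w -> A w \/ In w [a; b].
Proof. intros [[H|H]|H]; subst; simpl; auto. Qed.

Ltac nl := let w := fresh in let Hw := fresh in
  intros w Hw; simpl in Hw; repeat (destruct Hw as [Hw|Hw]; [subst w|]); [..|contradiction].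

Ltac modk := let u := fresh in let Hu := fresh in
  intros F I tv [?HL ?Hk];
  repeat match goal with
  | Hk : forall u, In u (?a :: ?r) -> Sat I tv u |- _ =>
      let H := fresh "Hs" in
      assert (H : Sat I tv a) by (apply Hk; simpl; auto);
      assert (forall u, In u r -> Sat I tv u) by (intros; apply Hk; simpl; auto);
      clear Hk
  end.

Lemma DN_case nf (Hnf : NormAx nf) A s : Gcomp nf A -> A (Neg (Neg s)) -> Gcomp nf (add A s).
Proof.
  intros HG H. pose proof HG as (Hb & Hp & Hf).
  destruct (choose A [Neg (Neg s)] [[s]] Hf) as (c & Hc & Hfc).
  - intros u [<-|[]]; auto.
  - modk. exists [s]. split; [simpl; auto|]. nl.
    apply Sat_Neg in Hs as (a & Ha & Ht); auto. apply ev_Neg in Ha as (b & Hb' & ->).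
    destruct HL as (_&_&_&Hneg&_). rewrite Hneg in Ht. exists b. split; auto.
    destruct (tv b); simpl in *; congruence.
  - destruct Hc as [<-|[]]. eapply Gcomp_of; eauto; [|apply sub1]. nl.
    apply Hb in H. apply normal_Neg_inv in H; auto. apply normal_Neg_inv in H; auto.
Qed.

Lemma BQ_case nf (Hnf : NormAx nf) A (s t : tm o) : Gcomp nf A -> A (Eqt s t) ->
  Gcomp nf (add (add A s) t) \/ Gcomp nf (add (add A (Neg s)) (Neg t)).
Proof.
  intros HG H. pose proof HG as (Hb & Hp & Hf).
  pose proof (Hb _ H) as Hn; apply normal_Eqt_inv in Hn; auto. destruct Hn as [Hns Hnt].
  destruct (choose A [Eqt s t] [[s; t]; [Neg s; Neg t]] Hf) as (c & Hc & Hfc).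
  - intros u [<-|[]]; auto.
  - modk. apply Sat_Eqt in Hs as (x & y & Hx & Hy & <-); auto.
    destruct (tv x) eqn:E.
    + exists [s; t]. split; [simpl; auto|]. nl; exists x; auto.
    + exists [Neg s; Neg t]. split; [simpl; auto|]. nl; apply Sat_Neg; eauto.
  - destruct Hc as [<-|[<-|[]]].
    + left. eapply Gcomp_of; eauto; [|apply sub2]. nl; auto.
    + right. eapply Gcomp_of; eauto; [|apply sub2]. nl; apply normal_Neg; auto.
Qed.

Lemma BE_case nf (Hnf : NormAx nf) A (s t : tm o) : Gcomp nf A -> A (Neqt s t) ->
  Gcomp nf (add (add A s) (Neg t)) \/ Gcomp nf (add (add A (Neg s)) t).
Proof.
  intros HG H. pose proof HG as (Hb & Hp & Hf).
  pose proof (Hb _ H) as Hn; apply normal_Neqt_inv in Hn; auto. destruct Hn as [Hns Hnt].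
  destruct (choose A [Neqt s t] [[s; Neg t]; [Neg s; t]] Hf) as (c & Hc & Hfc).
  - intros u [<-|[]]; auto.
  - modk. apply Sat_Neqt in Hs as (x & y & Hx & Hy & Hxy); auto.
    pose proof HL as (_ & Hinj & _).
    destruct (tv x) eqn:E1, (tv y) eqn:E2.
    + exfalso. apply Hxy, Hinj. congruence.
    + exists [s; Neg t]. split; [simpl; auto|]. nl; [exists x; auto|apply Sat_Neg; eauto].
    + exists [Neg s; t]. split; [simpl; auto|]. nl; [apply Sat_Neg; eauto|exists y; auto].
    + exfalso. apply Hxy, Hinj. congruence.
  - destruct Hc as [<-|[<-|[]]].
    + left. eapply Gcomp_of; eauto; [|apply sub2]. nl; auto; apply normal_Neg; auto.
    + right. eapply Gcomp_of; eauto; [|apply sub2]. nl; auto; apply normal_Neg; auto.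
Qed.

Lemma FQ_case nf (Hnf : NormAx nf) A sg tau (s t : tm (Arr sg tau)) : Gcomp nf A -> A (Eqt s t) ->
  forall u : tm sg, normal nf u ->
       Gcomp nf (add A (Eqt (nf _ (App s u)) (nf _ (App t u)))).
Proof.
  intros HG H u Hu. pose proof HG as (Hb & Hp & Hf).
  destruct (choose A [Eqt s t] [[Eqt (nf _ (App s u)) (nf _ (App t u))]] Hf) as (c & Hc & Hfc).
  - intros w [<-|[]]; auto.
  - modk. apply Sat_Eqt in Hs as (x & y & Hx & Hy & <-); auto.
    pose proof HL as (Hint & _). destruct (Hint _ u) as [a Ha].
    exists [Eqt (nf _ (App s u)) (nf _ (App t u))]. split; [simpl; auto|]. nl.
    apply Sat_Eqt; auto. exists (Defs.app x a), (Defs.app x a).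
    split; [|split; auto]; apply (nf_sound Hnf); auto; simpl; eauto.
  - destruct Hc as [<-|[]]. eapply Gcomp_of; eauto; [|apply sub1]. nl.
    apply normal_Eqt; auto; apply normal_nf; auto.
Qed.

Lemma Con_case nf (Hnf : NormAx nf) A al (s t u v : tm al) : Gcomp nf A ->
  A (Eqt s t) -> A (Neqt u v) ->
     Gcomp nf (add (add A (Neqt s u)) (Neqt t u)) \/
     Gcomp nf (add (add A (Neqt s v)) (Neqt t v)).
Proof.
  intros HG H1 H2. pose proof HG as (Hb & Hp & Hf).
  pose proof (Hb _ H1) as Hn1; apply normal_Eqt_inv in Hn1; auto. destruct Hn1 as [Hns Hnt].
  pose proof (Hb _ H2) as Hn2; apply normal_Neqt_inv in Hn2; auto. destruct Hn2 as [Hnu Hnv].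
  destruct (choose A [Eqt s t; Neqt u v] [[Neqt s u; Neqt t u]; [Neqt s v; Neqt t v]] Hf)
    as (c & Hc & Hfc).
  - intros w [<-|[<-|[]]]; auto.
  - modk. apply Sat_Eqt in Hs as (x & y & Hx & Hy & <-); auto.
    apply Sat_Neqt in Hs0 as (a & b & Ha & Hb' & Hab); auto.
    destruct (classic (x = a)) as [<-|Hxa].
    + exists [Neqt s v; Neqt t v]. split; [simpl; auto|]. nl; apply Sat_Neqt; auto;
        exists x, b; auto.
    + exists [Neqt s u; Neqt t u]. split; [simpl; auto|]. nl; apply Sat_Neqt; auto;
        exists x, a; auto.
  - destruct Hc as [<-|[<-|[]]].
    + left. eapply Gcomp_of; eauto; [|apply sub2]. nl; apply normal_Neqt; auto.
    + right. eapply Gcomp_of; eauto; [|apply sub2]. nl; apply normal_Neqt; auto.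
Qed.

Lemma Mat_case nf (Hnf : NormAx nf) A x (u v : tm o) l : Gcomp nf A -> Spines x u v l ->
  A u -> A (Neg v) -> l <> nil /\ exists d, In d l /\ Gcomp nf (add A d).
Proof.
  intros HG HS Hu Hv. pose proof HG as (Hb & Hp & Hf).
  assert (Hnd : forall d, In d l -> normal nf d).
  { destruct (spines_is_spine _ _ _ _ _ HS) as [Hsu Hsv].
    apply (@spines_normal nf Hnf _ _ _ _ _ HS).
    - pose proof (Hb _ Hu) as N. etransitivity; [symmetry; apply (nf_spine Hnf u Hsu)|exact N].
    - pose proof (Hb _ Hv) as N. apply normal_Neg_inv in N; auto.
      etransitivity; [symmetry; apply (nf_spine Hnf v Hsv)|exact N]. }
  destruct (choose A [u; Neg v] (map (fun d => [d]) l) Hf) as (c & Hc & Hfc).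
  - intros w [<-|[<-|[]]]; auto.
  - modk. apply NNPP; intro Hno.
    apply Sat_Neg in Hs0 as (b & Hb' & Htb); auto. destruct Hs as (a & Ha & Hta).
    assert (a = b) as <-.
    { eapply (spines_sem _ _ _ _ _ _ _ _ HL HS); eauto. intros d Hd Hsd. apply Hno. exists [d]. split.
      - apply (in_map (fun d0 : tm o => [d0])); auto.
      - nl; auto. }
    congruence.
  - apply in_map_iff in Hc as (d & <- & Hd). split.
    + intro; subst; contradiction.
    + exists d. split; auto. eapply Gcomp_of with (c := [d]); eauto; [|apply sub1]. nl; auto.
Qed.

Lemma Dec_case nf (Hnf : NormAx nf) A x al (u v : tm al) l : Gcomp nf A -> is_sort al ->
  Spines x u v l -> A (Neqt u v) -> l <> nil /\ exists d, In d l /\ Gcomp nf (add A d).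
Proof.
  intros HG [k ->] HS Huv. pose proof HG as (Hb & Hp & Hf).
  assert (Hnd : forall d, In d l -> normal nf d).
  { destruct (spines_is_spine _ _ _ _ _ HS) as [Hsu Hsv].
    pose proof (Hb _ Huv) as N. apply normal_Neqt_inv in N as [Nu Nv]; auto.
    apply (@spines_normal nf Hnf _ _ _ _ _ HS).
    - etransitivity; [symmetry; apply (nf_spine Hnf u Hsu)|exact Nu].
    - etransitivity; [symmetry; apply (nf_spine Hnf v Hsv)|exact Nv]. }
  destruct (choose A [Neqt u v] (map (fun d => [d]) l) Hf) as (c & Hc & Hfc).
  - intros w [<-|[]]; auto.
  - modk. apply NNPP; intro Hno.
    apply Sat_Neqt in Hs as (a & b & Ha & Hb' & Hab); auto.
    apply Hab. eapply (spines_sem _ _ _ _ _ _ _ _ HL HS); eauto. intros d Hd Hsd. apply Hno. exists [d]. split.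
    + apply (in_map (fun d0 : tm o => [d0])); auto.
    + nl; auto.
  - apply in_map_iff in Hc as (d & <- & Hd). split.
    + intro; subst; contradiction.
    + exists d. split; auto. eapply Gcomp_of with (c := [d]); eauto; [|apply sub1]. nl; auto.
Qed.

Lemma FE_case nf (Hnf : NormAx nf) A sg tau (s t : tm (Arr sg tau)) : Gcomp nf A -> A (Neqt s t) ->
  exists n, Gcomp nf (add A (Neqt (nf _ (App s (Nm (NVar sg n) : tm sg)))
                                  (nf _ (App t (Nm (NVar sg n) : tm sg))))).
Proof.
  intros HG H. pose proof HG as (Hb & Hp & Hf).
  destruct (Hp sg 0) as (n & _ & Hn). exists n.
  eapply Gcomp_of; eauto; [| |apply sub1].
  - nl. apply normal_Neqt; auto; apply normal_nf; auto.
  - intros l Hl. destruct (extract A _ l Hl) as (l' & Hl1 & Hl2).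
    destruct (Hf (Neqt s t :: l')) as (F & I & tv & HL & HM).
    { intros w [<-|Hw]; auto. }
    assert (Hst : Sat I tv (Neqt s t)) by (apply HM; simpl; auto).
    apply Sat_Neqt in Hst as (x & y & Hx & Hy & Hxy); auto.
    assert (exists c, Defs.app x c <> Defs.app y c) as [c Hc].
    { apply NNPP; intro Hno. apply Hxy. apply app_ext. intro c. apply NNPP; intro. apply Hno; eauto. }
    pose proof (logical_upd _ _ _ sg n c HL) as HL'.
    assert (Hag : forall s0 (w : tm s0), (free_in (NVar sg n) w -> free_in (NVar sg n) (Neqt s t)) ->
               forall a, ev w I a <-> ev w (upd I (NVar sg n) c) a).
    { intros s0 w Hw. apply ev_agree. intros y0 Hy0. rewrite upd_other; [reflexivity|].
      intro E. subst y0. apply Hn. exists (Neqt s t). split; auto. }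
    exists F, (upd I (NVar sg n) c), tv. split; auto.
    intros w Hw. destruct (Hl2 w Hw) as [Hw'|Hw'].
    + destruct (HM w (or_intror Hw')) as (a & Ha & Hta). exists a; split; auto.
      refine (proj1 (ev_agree F _ w I (upd I (NVar sg n) c) _ a) Ha). intros y0 Hy0. rewrite upd_other; [reflexivity|].
      intro E. subst y0. apply Hn. eauto.
    + destruct Hw' as [<-|[]]. apply Sat_Neqt; auto.
      pose proof HL' as (Hint' & _).
      exists (Defs.app x c), (Defs.app y c). split; [|split; auto];
        apply (nf_sound Hnf); auto; simpl.
      * exists x, c. split; [apply Hag; auto|split; [symmetry; exact (upd_same F I (NVar sg n) c)|reflexivity]].
        intros Hfr. simpl. auto.
      * exists y, c. split; [apply Hag; auto|split; [symmetry; exact (upd_same F I (NVar sg n) c)|reflexivity]].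
        intros Hfr. simpl. auto.
Qed.

Lemma complete_case nf (Hnf : NormAx nf) A s : Gcomp nf A -> normal nf s ->
  Gcomp nf (add A s) \/ Gcomp nf (add A (Neg s)).
Proof.
  intros HG Hs. pose proof HG as (Hb & Hp & Hf).
  destruct (choose A [] [[s]; [Neg s]] Hf) as (c & Hc & Hfc).
  - intros w [].
  - intros F I tv [HL _]. destruct (Sat_dec _ _ _ s HL) as [H|H].
    + exists [s]. split; [simpl; auto|]. nl; auto.
    + exists [Neg s]. split; [simpl; auto|]. nl; auto.
  - destruct Hc as [<-|[<-|[]]].
    + left. eapply Gcomp_of; eauto; [|apply sub1]. nl; auto.
    + right. eapply Gcomp_of; eauto; [|apply sub1]. nl; apply normal_Neg; auto.
Qed.

Theorem lemma10p2 (nf : nfop) (Hnf : NormAx nf) :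
  ACC nf (Gcomp nf) /\ complete_class nf (Gcomp nf).
Proof.
  split.
  - intros A HA. split; [|split; [|split; [|split; [|split; [|split; [|split]]]]]].
    + intros s H. apply DN_case; auto.
    + intros s t H. apply BQ_case; auto.
    + intros s t H. apply BE_case; auto.
    + intros sg tau s t H u Hu. apply FQ_case; auto.
    + intros sg tau s t H. apply FE_case; auto.
    + intros x u v l _ HS Hu Hv. eapply Mat_case; eauto.
    + intros x al u v l _ Hal HS H. eapply Dec_case; eauto.
    + intros al s t u v _ H1 H2. apply Con_case; auto.
  - intros A HA s Hs. apply complete_case; auto.
Qed.
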